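(* There is a Luzin almost disjoint family (on a countable set) which has no uncountable $3$-near-Luzin subfamily.
   Context: An almost disjoint family is a collection of infinite sets whose pairwise intersections are finite. For an uncountable almost disjoint family $\mathcal A$ on a countable set $W$: $\mathcal A$ is Luzin iff there is an enumeration $\mathcal A=\{a_\alpha:\alpha<\omega_1\}$ such that for every finite $w\subseteq W$ and every $\alpha<\omega_1$ the set $\{\beta<\alpha: a_\alpha\cap a_\beta\subseteq w\}$ is finite. $\mathcal A$ is $3$-near-Luzin iff for all uncountable $\mathcal C_0,\mathcal C_1,\mathcal C_2\subseteq\mathcal A$ the set $\bigcap_{i<3}\bigcup\mathcal C_i$ is infinite. *)

(* Defs.v *)
From mathcomp Require Import all_boot all_order.
From mathcomp Require Import boolp classical_sets cardinality.
Set Implicit Arguments. Unset Strict Implicit. Unset Printing Implicit Defensive.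
Local Open Scope classical_set_scope.

(* An (I, lt) is "omega_1-like": a strict well-order on I that is total,
   in which I is uncountable and every proper initial segment is countable.
   Such an order is isomorphic to (omega_1, <). *)
Definition omega1_order (I : Type) (lt : I -> I -> Prop) : Prop :=
  (forall x, ~ lt x x) /\
  (forall x y z, lt x y -> lt y z -> lt x z) /\
  (forall x y, x = y \/ lt x y \/ lt y x) /\
  well_founded lt /\
  ~ countable [set: I] /\
  (forall x, countable [set y | lt y x]).

Definition almost_disjoint (T : Type) (A : set (set T)) : Prop :=
  (forall a, A a -> infinite_set a) /\
  (forall a b, A a -> A b -> a <> b -> finite_set (a `&` b)).

Definition uncountable (T : Type) (A : set T) : Prop := ~ countable A.

Definition luzin (T : Type) (A : set (set T)) : Prop :=
  almost_disjoint A /\ uncountable A /\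
  exists (I : Type) (lt : I -> I -> Prop) (a : I -> set T),
    [/\ omega1_order lt, injective a, range a = A &
        forall (w : set T) (alpha : I), finite_set w ->
          finite_set [set beta | lt beta alpha /\ a alpha `&` a beta `<=` w]].

Definition near_luzin (n : nat) (T : Type) (A : set (set T)) : Prop :=
  forall C : 'I_n -> set (set T),
    (forall i, C i `<=` A /\ uncountable (C i)) ->
    infinite_set (\bigcap_(i in [set: 'I_n]) \bigcup_(c in C i) c).

(* Main.v *)
Require Import Defs.
From mathcomp Require Import all_boot all_order.
From mathcomp Require Import boolp classical_sets cardinality.
From mathcomp Require Import wochoice.
Local Open Scope classical_set_scope.

Section WO.
Variable T : eqType.
Variable R : rel T.
Hypothesis HR : well_order R.

Lemma wo_min (P : T -> Prop) : (exists x, P x) -> exists m, P m /\ forall y, P y -> R m y.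
Proof.
move=> [x Px].
have [|m [[Am lb] _]] := HR [pred z | `[< P z >]].
  by exists x; rewrite inE.
exists m; split; first by move: Am; rewrite inE.
by move=> y Py; apply: lb; rewrite inE.
Qed.

Lemma wo_refl x : R x x.
Proof.
by have [m [-> H]] := @wo_min (fun z => z = x) (ex_intro _ x erefl); apply: H.
Qed.

Lemma wo_antisym x y : R x y -> R y x -> x = y.
Proof.
move=> Rxy Ryx.
have [|m [_ U]] := HR [pred z | (z == x) || (z == y)].
  by exists x; rewrite inE eqxx.
have mx : minimum_of R [pred z | (z == x) || (z == y)] x.
  split; first by rewrite inE eqxx.
  by move=> z; rewrite inE => /orP[/eqP->|/eqP->]; rewrite ?wo_refl.
have my : minimum_of R [pred z | (z == x) || (z == y)] y.
  split; first by rewrite inE eqxx orbT.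
  by move=> z; rewrite inE => /orP[/eqP->|/eqP->]; rewrite ?wo_refl.
by rewrite -(U _ mx) -(U _ my).
Qed.

Lemma wo_total x y : R x y \/ R y x.
Proof.
have [m [Pm H]] := @wo_min (fun z => z = x \/ z = y) (ex_intro _ x (or_introl erefl)).
case: Pm => E; subst m; [left|right]; apply: H; tauto.
Qed.

Definition wlt x y := x <> y /\ R x y.

Lemma wlt_trans x y z : wlt x y -> wlt y z -> wlt x z.
Proof.
move=> [nxy Rxy] [nyz Ryz].
have [m [Pm H]] := @wo_min (fun w => w = x \/ w = y \/ w = z) (ex_intro _ x (or_introl erefl)).
case: Pm => [mx|[my|mz]].
- subst m; split; last by apply: H; tauto.
  move=> xz; subst z; apply: nxy; exact: wo_antisym.
- subst m; exfalso; apply: nxy; apply: wo_antisym => //; apply: H; tauto.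
- subst m; exfalso; apply: nyz; apply: wo_antisym => //; apply: H; tauto.
Qed.

Lemma wlt_wf : well_founded wlt.
Proof.
move=> x; apply: contrapT => nAx.
have [m [nAm H]] := @wo_min (fun z => ~ Acc wlt z) (ex_intro _ x nAx).
apply: nAm; constructor => y [nym Rym].
apply: contrapT => nAy; apply: nym; apply: wo_antisym => //; exact: H.
Qed.

End WO.
Arguments wlt {T} R x y.
Arguments wo_min {T R} HR P.
Arguments wo_total {T R} HR x y.
Arguments wo_antisym {T R} HR x y.
Arguments wlt_trans {T R} HR x y z.
Arguments wlt_wf {T R} HR.

Set Implicit Arguments. Unset Strict Implicit.

Lemma countable_sub T (A B : set T) : A `<=` B -> countable B -> countable A.
Proof. by move=> AB; apply: sub_countable; apply: subset_card_le. Qed.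

Lemma countable_image_sub T U (f : T -> U) (A : set T) :
  countable A -> countable (f @` A).
Proof. by move=> cA; apply: card_le_trans (card_image_le f A) cA. Qed.

Lemma countableU2 T (A B : set T) : countable A -> countable B -> countable (A `|` B).
Proof.
move=> cA cB; apply: (countable_sub (B := \bigcup_(i in [set: bool]) (if i then A else B))).
  by move=> x [Ax|Bx]; [exists true|exists false].
by apply: bigcup_countable => // -[].
Qed.

Definition agree (x y : nat -> bool) N := forall i, i < N -> x i = y i.

Lemma mkseq_agree x y N : mkseq x N = mkseq y N -> agree x y N.
Proof.
move=> E i iN; have := congr1 (fun s => nth false s i) E.
by rewrite !nth_mkseq.
Qed.

Lemma agree_mkseq x y N : agree x y N -> mkseq x N = mkseq y N.
Proof.
move=> A; apply: (@eq_from_nth _ false); rewrite ?size_mkseq // => i iN.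
by rewrite !nth_mkseq // A.
Qed.

Lemma agree_le x y N M : M <= N -> agree x y N -> agree x y M.
Proof. by move=> MN A i iM; apply: A; apply: leq_trans MN. Qed.

Lemma finite_bounded (T : eqType) (f : T -> nat) (w : set T) :
  finite_set w -> exists M, forall p, w p -> f p < M.
Proof.
move=> /finite_seqP[s ->]; exists (\max_(p <- s) f p).+1 => p sp.
by rewrite ltnS; apply: (@leq_bigmax_seq _ s xpredT f p).
Qed.

Definition Sz (N : nat) : set (seq bool) := [set s | size s < N].

Lemma finite_Sz N : finite_set (Sz N).
Proof.
elim: N => [|N IH].
  apply: (sub_finite_set (B := set0)); last exact: finite_set0.
  by move=> s; rewrite /Sz /=.
apply: (sub_finite_set (B := [set [::]] `|` ((cons true @` Sz N) `|` (cons false @` Sz N)))).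
  move=> [|b s] /=; rewrite /Sz /= ?ltnS => H; first by left.
  by right; case: b; [left|right]; exists s.
by rewrite !finite_setU; split; [exact: finite_set1|split; exact: finite_image].
Qed.

Definition SN (N : nat) : set (seq bool * seq bool) := [set p | size p.1 < N /\ size p.2 < N].

Lemma finite_SN N : finite_set (SN N).
Proof.
apply: (sub_finite_set (B := Sz N `*` Sz N)); first by move=> p [].
by apply: finite_setX; exact: finite_Sz.
Qed.

Lemma finite_inj T (A : set T) (f : T -> nat) K :
  {in A &, injective f} -> (forall x, A x -> f x <= K) -> finite_set A.
Proof.
move=> finj fK.
rewrite -(eq_finite_set (inj_card_eq finj)).
apply: (sub_finite_set (B := [set k | k < K.+1])).
  by move=> _ [x Ax <-]; rewrite /= ltnS; apply: fK.
apply: (sub_finite_set (B := `I_K.+1)) => //; exact: finite_II.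
Qed.

Definition cone (s : seq bool) (bt : bool) : set (nat -> bool) :=
  [set x | mkseq x (size s) = s /\ x (size s) = bt].

Lemma cone_split (X : set (nat -> bool)) : ~ countable X ->
  exists s, ~ countable (X `&` cone s true) /\ ~ countable (X `&` cone s false).
Proof.
move=> uX; apply: contrapT => nH; apply: uX.
have H : forall s, countable (X `&` cone s true) \/ countable (X `&` cone s false).
  move=> s; apply: contrapT => nn; apply: nH; exists s.
  by split => h; apply: nn; [left|right].
pose step (t : seq bool) := rcons t `[< ~ countable (X `&` cone t true) >].
pose pre n := iter n step [::].
have size_pre n : size (pre n) = n.
  by elim: n => [//|n IH]; rewrite /pre iterS -/(pre n) /step size_rcons IH.
pose b n := nth false (pre n.+1) n.
have bn n : b n = `[< ~ countable (X `&` cone (pre n) true) >].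
  by rewrite /b /pre iterS -/(pre n) /step nth_rcons size_pre ltnn eqxx.
have nth_pre n i : i < n -> nth false (pre n) i = b i.
  elim: n => [//|n IH]; rewrite ltnS leq_eqVlt => /orP[/eqP->|lin] //.
  by rewrite /pre iterS -/(pre n) /step nth_rcons size_pre lin IH.
have pre_mk n : pre n = mkseq b n.
  apply: (@eq_from_nth _ false); rewrite ?size_mkseq ?size_pre // => i iN.
  by rewrite nth_mkseq // nth_pre.
apply: (countable_sub (B := [set b] `|`
   \bigcup_(n in [set: nat]) (X `&` cone (pre n) (~~ b n)))).
  move=> x Xx; have [->|nxb] := pselect (x = b); first by left.
  right.
  have ex : exists n, x n != b n.
    apply: contrapT => nex; apply: nxb; apply: funext => n.
    by apply/eqP; apply: contrapT => h; apply: nex; exists n; apply/negP.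
  case: (ex_minnP ex) => n xn mn; exists n => //; split=> //; split.
    rewrite size_pre pre_mk; apply: agree_mkseq => i iN.
    apply/eqP; apply: contrapT => /negP h.
    by have := mn _ h; rewrite leqNgt iN.
  by rewrite size_pre; move: xn; case: (x n); case: (b n).
apply: countableU2; first exact: countable1.
apply: bigcup_countable => // n _.
rewrite bn; case: asboolP => [u|c] /=; last first.
  by apply: contrapT.
by case: (H (pre n)).
Qed.

Lemma three_split (X : set (nat -> bool)) : ~ countable X ->
  exists J0 J1 J2 N, [/\ J0 `<=` X /\ J1 `<=` X /\ J2 `<=` X,
    ~ countable J0 /\ ~ countable J1 /\ ~ countable J2,
    (forall x y, J0 x -> J1 y \/ J2 y -> ~ agree x y N) &
    (forall x y, J1 x -> J2 y -> ~ agree x y N)].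
Proof.
move=> uX; have [s [u1 u0]] := cone_split uX.
have [s' [u11 u10]] := cone_split u1.
exists (X `&` cone s false), ((X `&` cone s true) `&` cone s' false),
  ((X `&` cone s true) `&` cone s' true), (maxn (size s) (size s')).+1.
split.
- by split; [move=> x []|split; move=> x [[]]].
- by [].
- move=> x y [_ [_ xs]] yJ Ag.
  have ys : y (size s) = true by case: yJ => -[[_ [_ ->]] _].
  have := Ag (size s); rewrite xs ys ltnS leq_maxl; by move=> /(_ isT).
- move=> x y [_ [_ xs]] [_ [_ ys]] Ag.
  have := Ag (size s'); rewrite xs ys ltnS leq_maxr; by move=> /(_ isT).
Qed.

Lemma pig3 (u v : seq bool) x0 x1 x2 n :
  (u = mkseq x0 n \/ v = mkseq x0 n) -> (u = mkseq x1 n \/ v = mkseq x1 n) ->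
  (u = mkseq x2 n \/ v = mkseq x2 n) ->
  agree x0 x1 n \/ agree x0 x2 n \/ agree x1 x2 n.
Proof.
case=> E0 [] E1 [] E2.
- by left; apply: mkseq_agree; rewrite -E0 -E1.
- by left; apply: mkseq_agree; rewrite -E0 -E1.
- by right; left; apply: mkseq_agree; rewrite -E0 -E2.
- by right; right; apply: mkseq_agree; rewrite -E1 -E2.
- by right; right; apply: mkseq_agree; rewrite -E1 -E2.
- by right; left; apply: mkseq_agree; rewrite -E0 -E2.
- by left; apply: mkseq_agree; rewrite -E0 -E1.
- by left; apply: mkseq_agree; rewrite -E0 -E1.
Qed.


Lemma natbool_uncountable : ~ countable [set: nat -> bool].
Proof.
move=> /countable_injP[f finj].
pose g n : nat -> bool := match pselect (exists h, f h = n) with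
  | left H => proj1_sig (cid H) | right _ => fun _ => false end.
pose d n := ~~ g n n.
have gd : g (f d) = d.
  rewrite /g; case: pselect => [H|]; last by move=> K; exfalso; apply: K; exists d.
  case: (cid H) => h /= hE; apply: finj; rewrite ?in_setE //.
have := congr1 (fun h => h (f d)) gd; rewrite /d /=.
by case: (g _ _).
Qed.



Lemma omega1_exists : exists (I : Type) (lt : I -> I -> Prop), omega1_order lt.
Proof.
have [R HR] := well_ordering_principle (nat -> bool).
pose lt := wlt R.
pose good x := `[< countable [set y | lt y x] >].
pose I := {x : nat -> bool | good x}.
have accI : forall x, Acc lt x -> forall a : I, val a = x ->
    Acc (fun a b : I => lt (val a) (val b)) a.
  move=> x; elim=> {}x _ IH a ax; constructor => b ba.
  by apply: (IH (val b)) => //; rewrite -ax.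
exists I, (fun a b : I => lt (val a) (val b)).
split; first by move=> a [].
split; first by move=> a b c ab bc; exact: (wlt_trans HR _ _ _ ab bc).
split.
  move=> a b; have [ab|nab] := pselect (a = b); first by left.
  have nv : val a <> val b by move=> /val_inj.
  right; have [Rab|Rba] := wo_total HR (val a) (val b); [left|right]; split=> //.
  by move=> E; apply: nv.
split; first by move=> a; exact: (accI (val a) (wlt_wf HR (val a)) a erefl).
split.
  move=> cI.
  have cG : countable [set x | good x].
    apply: (countable_sub _ (countable_image_sub val cI)).
    by move=> x gx; exists (exist _ x gx).
  have [x nx] : exists x, ~ good x.
    apply: contrapT => H; apply: natbool_uncountable; apply: (countable_sub _ cG).
    by move=> x _; apply: contrapT => nx; apply: H; exists x.
  have [m [nm H]] := wo_min HR (fun z => ~ good z) (ex_intro _ x nx).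
  apply: nm; apply/asboolP; apply: (countable_sub _ cG) => y [nym Rym].
  apply: contrapT => ny; apply: nym; exact: (wo_antisym HR _ _ Rym (H _ ny)).
move=> a; have /asboolP := valP a.
move=> /countable_injP[f finj]; apply/countable_injP; exists (f \o val).
move=> b c; rewrite !in_setE /= => bp cp E; apply: val_inj; apply: finj => //;
  by rewrite in_setE.
Qed.

Definition W := (seq bool * seq bool)%type.

Section Constr.
Variable I : Type.
Variable lt : I -> I -> Prop.
Hypothesis Hom : omega1_order lt.

Lemma lt_irr x : ~ lt x x. Proof. by case: Hom. Qed.
Lemma lt_trans x y z : lt x y -> lt y z -> lt x z.
Proof. by case: Hom => _ [H _]; apply: H. Qed.
Lemma lt_total x y : x = y \/ lt x y \/ lt y x.
Proof. by case: Hom => _ [_ [H _]]; apply: H. Qed.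
Lemma lt_wf : well_founded lt. Proof. by case: Hom => _ [_ [_ [H _]]]. Qed.
Lemma I_unc : ~ countable [set: I]. Proof. by case: Hom => _ [_ [_ [_ [H _]]]]. Qed.
Lemma preds_c x : countable [set y | lt y x]. Proof. by case: Hom => _ [_ [_ [_ [_ H]]]]. Qed.

Lemma e_ex a : exists f : I -> nat, {in [set b | lt b a] &, injective f}.
Proof. exact/countable_injP/preds_c. Qed.

Definition e : I -> I -> nat := projT1 (choice e_ex).

Lemma e_inj a b c : lt b a -> lt c a -> e a b = e a c -> b = c.
Proof.
move=> ba ca; rewrite /e; case: (choice e_ex) => f /= fi; apply: fi;
  by rewrite in_setE.
Qed.

Definition posF (j k : nat) : nat := choice.pickle (true, j, k).
Definition posY (j : nat) : nat := choice.pickle (false, j, 0).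
Definition bnd (k : nat) : nat := (k + \max_(j < k.+1) posF j k).+1.

Lemma posF_bnd j k : j <= k -> posF j k < bnd k.
Proof.
move=> jk; rewrite /bnd ltnS; apply: leq_trans (leq_addl _ _).
by apply: (@leq_bigmax_cond _ _ (fun j : 'I_k.+1 => posF j k) (Ordinal (n:=k.+1) (m:=j) jk)).
Qed.

Lemma k_bnd k : k < bnd k.
Proof. by rewrite /bnd ltnS leq_addr. Qed.

Definition G (a : I) (f : I -> nat -> bool) : nat -> bool := fun p =>
  match pselect (exists db : I * I, [/\ lt db.1 a, lt db.2 db.1,
        e a db.1 <= e db.1 db.2 & p = posF (e a db.1) (e db.1 db.2)]) with
  | left H => ~~ f (proj1_sig (cid H)).2 p
  | right _ => match pselect (exists d, lt d a /\ p = posY (e a d)) with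
     | left H => ~~ f (proj1_sig (cid H)) p
     | right _ => false end end.

Lemma G_ext a f g : (forall b, lt b a -> f b = g b) -> G a f = G a g.
Proof.
move=> fg; apply: funext => p; rewrite /G.
case: pselect => [H|_].
  case: (cid H) => [[d b] [H1 H2 _ _]] /=; rewrite (fg b) //; exact: lt_trans H2 H1.
case: pselect => [H|//].
by case: (cid H) => d [H1 _] /=; rewrite (fg d).
Qed.

Definition Fr (a : I) (rec : forall b, lt b a -> nat -> bool) : nat -> bool :=
  G a (fun b => match pselect (lt b a) with left H => rec b H | right _ => fun _ => false end).

Definition r : I -> nat -> bool := Fix lt_wf (fun _ => nat -> bool) Fr.

Lemma r_eq a : r a = G a r.
Proof.
rewrite /r Fix_eq.
  by rewrite /Fr; apply: G_ext => b ba; case: pselect.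
move=> x f g fg; rewrite /Fr; congr (G x _); apply: funext => b.
by case: pselect.
Qed.

Lemma rF a d b : lt d a -> lt b d -> e a d <= e d b ->
  r a (posF (e a d) (e d b)) = ~~ r b (posF (e a d) (e d b)).
Proof.
move=> da bd le; rewrite [in LHS]r_eq /G; case: pselect => [H|nH]; last first.
  by exfalso; apply: nH; exists (d, b).
case: (cid H) => [[d' b'] [H1 H2 _ H4]] /=.
move: H4; rewrite /posF => /(pcan_inj (@choice.pickleK_inv _)) [E1 E2].
have dd : d' = d by apply: (e_inj H1 da).
subst d'; have bb : b' = b by apply: (e_inj H2 bd).
by subst b'.
Qed.

Lemma rY a d : lt d a -> r a (posY (e a d)) = ~~ r d (posY (e a d)).
Proof.
move=> da; rewrite [in LHS]r_eq /G; case: pselect => [H|_].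
  by exfalso; case: H => [[d' b'] [_ _ _]]; rewrite /posY /posF => /(pcan_inj (@choice.pickleK_inv _)).
case: pselect => [H|nH]; last by exfalso; apply: nH; exists d.
case: (cid H) => d' [H1 H2] /=.
move: H2; rewrite /posY => /(pcan_inj (@choice.pickleK_inv _)) [E].
by have -> : d' = d by apply: (e_inj H1 da).
Qed.

Lemma r_neq a b : a <> b -> exists i, r a i <> r b i.
Proof.
move=> ab; have [//|[ba|ab']] := lt_total a b.
  by exists (posY (e b a)); rewrite [r b _]rY //; case: (r a _).
by exists (posY (e a b)); rewrite rY //; case: (r b _).
Qed.

Lemma n_ex a : forall b, exists N, bnd (e a b) <= N /\
  forall b', lt b' a -> e a b' < e a b -> ~ agree (r b) (r b') N.
Proof.
move=> b.
suff: forall k, exists N, bnd (e a b) <= N /\ forall b', lt b' a -> e a b' < k ->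
    e a b' < e a b -> ~ agree (r b) (r b') N.
  by move=> /(_ (e a b)) [N [H1 H2]]; exists N; split=> // b' b'a lt'; apply: H2.
elim=> [|k [N [HN IH]]]; first by exists (bnd (e a b)).
have [[b0 [b0a b0k b0lt]]|nb] :=
  pselect (exists b0, [/\ lt b0 a, e a b0 = k & e a b0 < e a b]).
  have b0b : b <> b0 by move=> E; subst; rewrite ltnn in b0lt.
  have [i ri] := r_neq b0b.
  exists (maxn N i.+1); split; first by apply: leq_trans HN (leq_maxl _ _).
  move=> b' b'a; rewrite ltnS leq_eqVlt => /orP[/eqP ek|lk] lt' A.
    have bb : b' = b0 by apply: (e_inj b'a b0a); rewrite ek b0k.
    subst b'; apply: ri; apply: A; by rewrite leq_max ltnSn orbT.
  by apply: (IH b' b'a lk lt'); apply: agree_le A; apply: leq_maxl.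
exists N; split=> // b' b'a; rewrite ltnS leq_eqVlt => /orP[/eqP ek|lk] lt'.
  by exfalso; apply: nb; exists b'.
exact: IH.
Qed.

Definition nn (a b : I) : nat := projT1 (choice (n_ex a)) b.

Lemma nn_bnd a b : bnd (e a b) <= nn a b.
Proof. by rewrite /nn; case: (choice (n_ex a)) => f /= H; case: (H b). Qed.

Lemma nn_sep a b b' : lt b' a -> e a b' < e a b -> ~ agree (r b) (r b') (nn a b).
Proof. by rewrite /nn; case: (choice (n_ex a)) => f /= H; case: (H b) => _; apply. Qed.

Definition Pset a : set W := [set p | p.1 = mkseq (r a) (size p.1) /\ size p.2 = size p.1].
Definition qpt a b : W := (mkseq (r b) (nn a b), mkseq (r a) (nn a b)).
Definition Tset a : set W := [set p | exists2 b, lt b a & p = qpt a b].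
Definition aa a : set W := Pset a `|` Tset a.

Lemma aa_shape a p : aa a p -> size p.2 = size p.1 /\
  (p.1 = mkseq (r a) (size p.1) \/ p.2 = mkseq (r a) (size p.2)).
Proof.
case=> [[H1 H2]|[b _ ->]] /=; first by split=> //; left.
by rewrite !size_mkseq; split=> //; right.
Qed.

Lemma qpt_in a b : lt b a -> aa a (qpt a b) /\ aa b (qpt a b).
Proof.
move=> ba; split; first by right; exists b.
by left; rewrite /Pset /qpt /= !size_mkseq.
Qed.

Lemma aa_infinite a : infinite_set (aa a).
Proof.
move=> /(finite_bounded (fun p : W => size p.1)) [M HM].
have h : aa a (mkseq (r a) M, mkseq (r a) M) by left; rewrite /Pset /= !size_mkseq.
by have := HM _ h; rewrite /= size_mkseq ltnn.
Qed.

Lemma finF a K : finite_set [set b | lt b a /\ e a b <= K].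
Proof.
apply: (@finite_inj _ _ (e a) K); last by move=> x [].
by move=> x y; rewrite !in_setE => -[xa _] [ya _]; apply: e_inj.
Qed.

Lemma AD_lt a d : lt a d -> finite_set (aa a `&` aa d).
Proof.
move=> ad.
have ad' : a <> d by move=> E; subst; exact: lt_irr ad.
have [i0 ri0] := r_neq ad'.
have Sm : forall n, agree (r a) (r d) n -> n < i0.+1.
  move=> n Ag; rewrite ltnNge; apply/negP => h; apply: ri0; exact: Ag.
apply: (sub_finite_set (B := SN i0.+1 `|` ([set qpt d a] `|`
   ((qpt d @` [set b | lt b d /\ e d b <= e d a]) `|`
    (qpt a @` [set b | lt b a /\ e a b <= e d a]))))); last first.
  rewrite !finite_setU; split; first exact: finite_SN.
  split; first exact: finite_set1.
  by split; apply: finite_image; apply: finF.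
move=> p [[[P1 P2]|[b ba ->]] [[Q1 Q2]|[b' bd E]]].
- left; rewrite /SN /= P2.
  have h := Sm _ (mkseq_agree (etrans (esym P1) Q1)); by split.
- subst p; move: P1; rewrite /= size_mkseq => P1.
  have [ba|nba] := pselect (b' = a); first by subst b'; right; left.
  right; right; left; exists b' => //; split=> //.
  rewrite leqNgt; apply/negP => lt'.
  by apply: (nn_sep ad lt'); apply: mkseq_agree.
- move: Q1; rewrite /= size_mkseq => Q1.
  right; right; right; exists b => //; split=> //.
  rewrite leqNgt; apply/negP => lt'.
  have le' : e d a <= e a b by apply: ltnW.
  have Ag := mkseq_agree Q1.
  have := rF ad ba le'.
  rewrite -Ag; first by case: (r b _).
  apply: leq_trans (posF_bnd le') (nn_bnd _ _).
- left; have E2 := congr1 snd E; move: E2; rewrite /= => E2.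
  have En : nn a b = nn d b'.
    by have := congr1 size E2; rewrite !size_mkseq.
  rewrite -En in E2; have h := Sm _ (mkseq_agree E2).
  by rewrite /SN /= !size_mkseq.
Qed.

Lemma AD_any a d : a <> d -> finite_set (aa a `&` aa d).
Proof.
move=> ad; have [//|[H|H]] := lt_total a d; first exact: AD_lt.
by rewrite setIC; apply: AD_lt.
Qed.

Lemma aa_inj : injective aa.
Proof.
move=> a d E; apply: contrapT => ad; apply: (aa_infinite (a:=a)).
by have := AD_any ad; rewrite -E setIid.
Qed.

Lemma luzin_fin a w : finite_set w ->
  finite_set [set b | lt b a /\ aa a `&` aa b `<=` w].
Proof.
move=> /(finite_bounded (fun p : W => size p.1)) [M HM].
apply: (sub_finite_set (B := [set b | lt b a /\ e a b <= M])); last exact: finF.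
move=> b [ba sub]; split=> //.
have [q1 q2] := qpt_in ba.
have := HM _ (sub _ (conj q1 q2)); rewrite /= size_mkseq => h.
apply: ltnW; apply: leq_trans (k_bnd _) _; apply: leq_trans (nn_bnd a b) (ltnW h).
Qed.

Lemma r_inj : injective r.
Proof.
move=> a b E; apply: contrapT => ab; have [i] := r_neq ab; by rewrite E.
Qed.

Lemma anti (B : set (set W)) : B `<=` range aa -> ~ countable B -> ~ near_luzin 3 B.
Proof.
move=> BA uB nl.
pose J := aa @^-1` B.
have BJ : B `<=` aa @` J.
  by move=> c Bc; have [a _ E] := BA c Bc; exists a; [rewrite /J /preimage /= E|exact: E].
have uJ : ~ countable J.
  by move=> cJ; apply: uB; apply: (countable_sub BJ (countable_image_sub aa cJ)).
have uX : ~ countable (r @` J).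
  move=> cX; apply: uJ.
  have E := inj_card_eq (f := r) (A := J) (fun x y _ _ => @r_inj x y).
  by rewrite -(eq_countable E).
have [J0 [J1 [J2 [N [[s0 [s1 s2]] [u0 [u1 u2]] sep1 sep2]]]]] := three_split uX.
have uK : forall Y, Y `<=` r @` J -> ~ countable Y -> ~ countable (aa @` (J `&` r @^-1` Y)).
  move=> Y YX uY cK; apply: uY.
  have E := inj_card_eq (f := aa) (A := J `&` r @^-1` Y) (fun x y _ _ => @aa_inj x y).
  rewrite (eq_countable E) in cK.
  apply: (countable_sub _ (countable_image_sub r cK)).
  by move=> x Yx; have [a Ja ra] := YX x Yx; exists a; [split=> //; rewrite /preimage /= ra|exact: ra].
have subB : forall Y, aa @` (J `&` r @^-1` Y) `<=` B by move=> Y _ [a [Ja _] <-].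
pose C (i : 'I_3) := if val i == 0 then aa @` (J `&` r @^-1` J0)
  else if val i == 1 then aa @` (J `&` r @^-1` J1) else aa @` (J `&` r @^-1` J2).
have := nl C; apply.
  by case=> [[|[|[|?]]] ?] //=; rewrite /C /=; split; try apply: subB; apply: uK.
apply: (sub_finite_set (B := SN N)); last exact: finite_SN.
move=> p H.
have [c0 [a0 [_ Ja0] <-] p0] := H (@Ordinal 3 0 isT) Logic.I.
have [c1 [a1 [_ Ja1] <-] p1] := H (@Ordinal 3 1 isT) Logic.I.
have [c2 [a2 [_ Ja2] <-] p2] := H (@Ordinal 3 2 isT) Logic.I.
have [sh o0] := aa_shape p0.
have [_ o1] := aa_shape p1.
have [_ o2] := aa_shape p2.
rewrite sh in o0 o1 o2.
suff h : size p.1 < N by rewrite /SN /= sh.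
rewrite ltnNge; apply/negP => Nle.
have [A|[A|A]] := pig3 o0 o1 o2.
- by apply: (sep1 (r a0) (r a1) Ja0 (or_introl Ja1)); apply: agree_le A.
- by apply: (sep1 (r a0) (r a2) Ja0 (or_intror Ja2)); apply: agree_le A.
- by apply: (sep2 (r a1) (r a2) Ja1 Ja2); apply: agree_le A.
Qed.

End Constr.

Theorem theorem5p9 :
  exists (W : Type) (A : set (set W)),
    countable [set: W] /\ luzin A /\
    forall B : set (set W), B `<=` A -> uncountable B -> ~ near_luzin 3 B.
Proof.
have [I [lt Hom]] := omega1_exists.
exists W, (range (aa Hom)).
split; first exact: countableP.
split; last by move=> B BA uB; apply: (anti BA uB).
split.
  split; first by move=> a [x _ <-]; apply: aa_infinite.
  move=> a b [x _ <-] [y _ <-] neq; apply: AD_any => xy; apply: neq; by rewrite xy.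
split.
  move=> cR; apply: (I_unc Hom).
  have E := inj_card_eq (f := aa Hom) (A := [set: I]) (fun x y _ _ => @aa_inj _ _ Hom x y).
  by rewrite -(eq_countable E).
exists I, lt, (aa Hom); split=> //; first exact: aa_inj.
by move=> w a fw; apply: luzin_fin.
Qed.
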